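(* Let $W=W(v_0;v_1,\dots,v_k)$ be a $k$-wheel and let $d:[1,k]\to\{1,2\}$ be a nonconstant function. Then there are exactly two coupled trees $T$ of $W$ such that $\operatorname{val}_T(v_i)=d(i)$ for all $i\in[1,k]$. (Consequently $W$ has exactly $2^{k+1}-4$ coupled trees.)
   Context: For $k\ge 3$ and distinct vertices $v_0,\dots,v_k$, the $k$-wheel $W=W(v_0;v_1,\dots,v_k)$ is the graph whose edges are the radii $v_0v_i$ ($1\le i\le k$) and the chords $v_iv_{i+1}$ ($1\le i\le k$), with $v_{k+1}=v_1$. A coupled tree of $W$ is a spanning tree $T\subseteq E(W)$ of $V(W)$ such that $E(W)\setminus T$ is also a spanning tree of $V(W)$. $\operatorname{val}_T(v)$ is the number of edges of $T$ incident to $v$. *)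

(* Defs.v *)
From mathcomp Require Import all_boot.
Set Implicit Arguments. Unset Strict Implicit. Unset Printing Implicit Defensive.

(* The k-wheel W(v0; v1,...,vk).  Vertices: 'I_k.+1, vertex 0 is the hub v0,
   vertex (lift ord0 i) (value i+1) is the rim vertex v_(i+1), for i : 'I_k. *)
Definition wvertex (k : nat) := 'I_k.+1.
Definition hub (k : nat) : wvertex k := ord0.
Definition rim (k : nat) (i : 'I_k) : wvertex k := lift ord0 i.

Definition rnext (k : nat) (i : 'I_k) : 'I_k :=
  Ordinal (ltn_pmod i.+1 (leq_ltn_trans (leq0n i) (ltn_ord i))).

(* Edges of W: inl i = radius v0 v_(i+1); inr i = chord v_(i+1) v_(i+2)
   (indices mod k). *)
Definition wedge (k : nat) := ('I_k + 'I_k)%type.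

Definition ends (k : nat) (e : wedge k) : wvertex k * wvertex k :=
  match e with
  | inl i => (hub k, rim i)
  | inr i => (rim i, rim (rnext i))
  end.

Definition incident (k : nat) (e : wedge k) (v : wvertex k) : bool :=
  ((ends e).1 == v) || ((ends e).2 == v).

Definition adj (k : nat) (T : {set wedge k}) : rel (wvertex k) :=
  fun x y => [exists e in T, ((ends e).1 == x) && ((ends e).2 == y)
                           || ((ends e).1 == y) && ((ends e).2 == x)].

Definition spanning_connected (k : nat) (T : {set wedge k}) : bool :=
  [forall x, forall y, connect (adj T) x y].

(* (V(W), T) is acyclic: no edge of T lies on a cycle, i.e. the ends of
   every edge e of T are not connected in T \ {e}. *)
Definition acyclic (k : nat) (T : {set wedge k}) : bool :=
  [forall e in T, ~~ connect (adj (T :\ e)) (ends e).1 (ends e).2].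

Definition spanning_tree (k : nat) (T : {set wedge k}) : bool :=
  spanning_connected T && acyclic T.

Definition coupled_tree (k : nat) (T : {set wedge k}) : bool :=
  spanning_tree T && spanning_tree (~: T).

Definition valence (k : nat) (T : {set wedge k}) (v : wvertex k) : nat :=
  #|[set e in T | incident e v]|.

(* Main.v *)
Require Import Defs.
From mathcomp Require Import all_boot zify.
Set Implicit Arguments. Unset Strict Implicit. Unset Printing Implicit Defensive.

Lemma connect_closedP (T : finType) (e : rel T) (P : T -> Prop) :
  (forall x y, e x y -> P x -> P y) -> forall x y, connect e x y -> P x -> P y.
Proof.
move=> H x y /connectP [p pth ->]; elim: p x pth => //= z p IH x /andP[exz pz] Px.
exact: IH (H _ _ exz Px).
Qed.

Section Wheel.
Variable k : nat.
Hypothesis hk : 3 <= k.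
Let kpos : 0 < k. Proof. by apply: leq_trans hk. Qed.

Definition ix (n : nat) : 'I_k := Ordinal (ltn_pmod n kpos).
Lemma ixE n : val (ix n) = n %% k. Proof. by []. Qed.
Lemma ix_ord (i : 'I_k) : ix i = i.
Proof. by apply: val_inj; rewrite /= modn_small. Qed.
Lemma ix_mod n : ix (n %% k) = ix n.
Proof. by apply: val_inj; rewrite /= modn_mod. Qed.
Lemma ix_modD m n : ix (m %% k + n) = ix (m + n).
Proof. by apply: val_inj; rewrite /= modnDml. Qed.
Lemma ix_addk n : ix (n + k) = ix n.
Proof. by apply: val_inj; rewrite /= modnDr. Qed.
Lemma rnext_ix n : rnext (ix n) = ix n.+1.
Proof. by apply: val_inj; rewrite /= -addn1 modnDml addn1. Qed.
Lemma rnextE (i : 'I_k) : rnext i = ix i.+1.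
Proof. by rewrite -rnext_ix ix_ord. Qed.

Definition prev (i : 'I_k) : 'I_k := ix (i + k.-1).
Lemma rnext_prev i : rnext (prev i) = i.
Proof. by rewrite /prev rnext_ix -addnS prednK // ix_addk ix_ord. Qed.
Lemma prev_rnext i : prev (rnext i) = i.
Proof.
by rewrite /prev rnextE ix_modD addSn -addnS prednK // ix_addk ix_ord.
Qed.
Lemma rnext_inj : injective (@rnext k).
Proof. exact: (can_inj prev_rnext). Qed.

Lemma ix_neq a j : 0 < j < k -> ix (a + j) != ix a.
Proof.
move=> /andP[j0 jk]; apply/negP => /eqP /(congr1 val) /=.
move/eqP; rewrite -{2}[a]addn0 eqn_modDl mod0n modn_small //.
by move/eqP=> E; rewrite E in j0.
Qed.

Lemma ix_surj s (x : 'I_k) : exists2 j, j < k & ix (s + j) = x.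
Proof.
exists ((x + (k - s %% k)) %% k); first exact: ltn_pmod.
apply: val_inj; rewrite /= modnDmr.
have hs : s %% k < k by exact: ltn_pmod.
rewrite addnA addnC addnA -modnDmr addnC.
rewrite modnDml {2}(divn_eq s k).
have -> : k - s %% k + (s %/ k * k + s %% k) = (s %/ k).+1 * k.
  by rewrite mulSn; lia.
by rewrite addnC modnMDl modn_small.
Qed.

Lemma prev_neq i : prev i != i.
Proof.
rewrite /prev -{2}(ix_ord i); apply: ix_neq.
by apply/andP; split; lia.
Qed.


Lemma adj_sym (T : {set wedge k}) : symmetric (adj T).
Proof.
move=> x y; apply/existsP/existsP => -[e He]; exists e; move: He;
by rewrite orbC.
Qed.

Lemma adj_edge (T : {set wedge k}) e : e \in T -> adj T (ends e).1 (ends e).2.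
Proof. by move=> eT; apply/existsP; exists e; rewrite eT !eqxx. Qed.

Lemma adj_edge2 (T : {set wedge k}) e x y : e \in T -> ends e = (x, y) ->
  adj T x y /\ adj T y x.
Proof.
move=> eT E; have := adj_edge eT; rewrite E /= => h; split => //.
by rewrite adj_sym.
Qed.

Lemma adjP (T : {set wedge k}) x y : adj T x y ->
  exists2 e, e \in T & ends e = (x, y) \/ ends e = (y, x).
Proof.
case/existsP=> e /andP[eT /orP[] /andP[/eqP h1 /eqP h2]]; exists e => //.
  by left; rewrite -h1 -h2 -surjective_pairing.
by right; rewrite -h1 -h2 -surjective_pairing.
Qed.

Lemma iter_h (par : wvertex k -> wvertex k) (h : wvertex k -> nat) :
  par (hub k) = hub k -> (forall v, v != hub k -> h (par v) < h v) ->
  forall n x, h (iter n par x) <= h x.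
Proof.
move=> ph hp; elim=> // n IH x; rewrite iterS.
case: (eqVneq (iter n par x) (hub k)) => [E|ne].
  by rewrite E ph -E.
by apply: leq_trans (ltnW (hp _ ne)) (IH x).
Qed.

Lemma parent_tree (T : {set wedge k}) (par : wvertex k -> wvertex k)
    (h : wvertex k -> nat) (ed : wvertex k -> wedge k) :
  par (hub k) = hub k ->
  (forall v, v != hub k -> h (par v) < h v) ->
  (forall v, v != hub k -> ends (ed v) = (v, par v) \/ ends (ed v) = (par v, v)) ->
  (forall v, v != hub k -> ed v \in T) ->
  (forall e, e \in T -> exists2 v, v != hub k & ed v = e) ->
  (forall v w, v != hub k -> w != hub k -> ed v = ed w -> v = w) ->
  spanning_tree T.
Proof.
move=> ph hp hends hin hsurj hinj.
have adjpar v : v != hub k -> adj T v (par v).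
  move=> vh; case: (hends v vh) => E.
    by case: (adj_edge2 (hin v vh) E).
  by case: (adj_edge2 (hin v vh) E).
have conh v : connect (adj T) v (hub k).
  move: {2}(h v) (leqnn (h v)) => n; elim: n v => [|n IH] v hv.
    case: (eqVneq v (hub k)) => [->|vh]; first exact: connect0.
    by have := hp v vh; rewrite ltnNge (leq_trans hv (leq0n _)).
  case: (eqVneq v (hub k)) => [->|vh]; first exact: connect0.
  apply: connect_trans (connect1 (adjpar v vh)) (IH _ _).
  by rewrite -ltnS; apply: leq_trans (hp v vh) hv.
apply/andP; split.
  apply/forallP=> x; apply/forallP=> y.
  apply: connect_trans (conh x) _.
  by rewrite (sym_connect_sym (adj_sym T)) conh.
apply/forallP=> e; apply/implyP=> eT.
case: (hsurj e eT) => v vh ede; subst e.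
pose P x := exists n, iter n par x = v.
have Pclosed x y : adj (T :\ ed v) x y -> P x <-> P y.
  case/adjP=> e' /setD1P[e'e e'T] ex.
  case: (hsurj e' e'T) => w wh ed'.
  have wv : w != v by apply: contra_neq e'e => wv; rewrite -ed' wv.
  have key : P w <-> P (par w).
    split=> -[n hn].
      case: n hn => [/= wv'|n]; first by rewrite wv' eqxx in wv.
      by rewrite iterSr => hn; exists n.
    by exists n.+1; rewrite iterSr.
  rewrite -ed' in ex.
  case: (hends w wh) => E; rewrite E in ex; case: ex => -[<- <-] //;
    by split => /key.
have Pv : P v by exists 0.
have nPpv : ~ P (par v).
  case=> n hn; have := iter_h ph hp n (par v); rewrite hn.
  by move/(leq_trans (hp v vh)); rewrite ltnn.
have nc x y : connect (adj (T :\ ed v)) x y -> P x <-> P y.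
  move=> cxy; split; first exact: connect_closedP (fun a b ab => proj1 (Pclosed a b ab)) _ _ cxy.
  move: cxy; rewrite (sym_connect_sym (adj_sym _)) => cyx.
  exact: connect_closedP (fun a b ab => proj1 (Pclosed a b ab)) _ _ cyx.
apply/negP=> C.
case: (hends v vh) C => E; rewrite E /= => C'; have [H1 H2] := nc _ _ C'.
  by apply: nPpv; apply: H1.
by apply: nPpv; apply: H2.
Qed.


Section Delta.
Variable c : 'I_k -> bool.
Hypothesis hc : exists j0, ~~ c j0.

Lemma exd (i : 'I_k) : exists n, ~~ c (ix (i + n)).
Proof. case: hc => j0 hj0; case: (ix_surj i j0) => n _ E; by exists n; rewrite E. Qed.

Definition dl (i : 'I_k) := ex_minn (exd i).

Lemma dl_spec (i : 'I_k) : ~~ c (ix (i + dl i)).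
Proof. by rewrite /dl; case: ex_minnP. Qed.
Lemma dl_min (i : 'I_k) n : ~~ c (ix (i + n)) -> dl i <= n.
Proof. by rewrite /dl; case: ex_minnP => m _ H /H. Qed.
Lemma dl_lt (i : 'I_k) : dl i < k.
Proof.
case: hc => j0 hj0; case: (ix_surj i j0) => n nk E.
by apply: leq_ltn_trans nk; apply: dl_min; rewrite E.
Qed.
Lemma dl_step (i : 'I_k) : c i -> dl i = (dl (rnext i)).+1.
Proof.
move=> ci; have := dl_spec i; case E: (dl i) => [|m].
  by rewrite addn0 ix_ord ci.
move=> hm; apply/eqP; rewrite eqSS eqn_leq; apply/andP; split.
  rewrite -ltnS -E; apply: dl_min.
  by have := dl_spec (rnext i); rewrite /= ix_modD addSnnS.
by apply: dl_min; rewrite ix_modD addSnnS.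
Qed.
End Delta.

Definition fA (c : 'I_k -> bool) : {set wedge k} :=
  [set e : wedge k | match e with inl i => ~~ c i | inr i => c i end].
Definition fB (c : 'I_k -> bool) : {set wedge k} :=
  [set e : wedge k | match e with inl i => ~~ c (prev i) | inr i => c i end].

Lemma rim_neq (i : 'I_k) : rim i != hub k.
Proof. by rewrite eq_sym /rim /hub neq_lift. Qed.
Lemma unlift_rim (i : 'I_k) : unlift ord0 (rim i) = Some i.
Proof. by rewrite /rim liftK. Qed.
Lemma unlift_hub : unlift ord0 (hub k) = None.
Proof. by rewrite /hub unlift_none. Qed.
Lemma rim_inj : injective (@rim k).
Proof. exact: lift_inj. Qed.

Lemma vertex_cases (v : wvertex k) : v != hub k -> exists i, v = rim i.
Proof. by case: (unliftP ord0 v) => [i ->|->]; [exists i | rewrite eqxx]. Qed.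

Lemma fA_tree c : (exists j0, ~~ c j0) -> spanning_tree (fA c).
Proof.
move=> hc.
pose par (v : wvertex k) := match unlift ord0 v with
  Some i => if c i then rim (rnext i) else hub k | None => hub k end.
pose h (v : wvertex k) := match unlift ord0 v with
  Some i => (dl hc i).+1 | None => 0 end.
pose ed (v : wvertex k) := match unlift ord0 v with
  Some i => if c i then inr i else inl i | None => inl (ix 0) end.
apply: (@parent_tree _ par h ed).
- by rewrite /par unlift_hub.
- move=> v /vertex_cases [i ->]; rewrite /h /par unlift_rim.
  case ci: (c i); last by rewrite unlift_hub.
  by rewrite unlift_rim (dl_step hc ci).
- move=> v /vertex_cases [i ->]; rewrite /ed /par unlift_rim.
  by case: (c i); [left | right].
- move=> v /vertex_cases [i ->]; rewrite /ed unlift_rim inE.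
  by case ci: (c i); rewrite ?ci.
- move=> [] i; rewrite inE => ci; exists (rim i); rewrite ?rim_neq //;
  by rewrite /ed unlift_rim; move: ci; case: (c i).
- move=> v w /vertex_cases [i ->] /vertex_cases [j ->].
  rewrite /ed !unlift_rim.
  by case: (c i); case: (c j) => // -[->].
Qed.

Lemma fB_tree c : (exists j0, ~~ c j0) -> spanning_tree (fB c).
Proof.
move=> hc.
pose par (v : wvertex k) := match unlift ord0 v with
  Some i => if c (prev i) then rim (prev i) else hub k | None => hub k end.
pose h (v : wvertex k) := match unlift ord0 v with
  Some i => k - dl hc i | None => 0 end.
pose ed (v : wvertex k) := match unlift ord0 v with
  Some i => if c (prev i) then inr (prev i) else inl i | None => inl (ix 0) end.
apply: (@parent_tree _ par h ed).
- by rewrite /par unlift_hub.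
- move=> v /vertex_cases [i ->]; rewrite /h /par unlift_rim.
  have := dl_lt hc i.
  case ci: (c (prev i)); last by rewrite unlift_hub; lia.
  by rewrite unlift_rim (dl_step hc ci) rnext_prev; lia.
- move=> v /vertex_cases [i ->]; rewrite /ed /par unlift_rim.
  by case: (c (prev i)); [right; rewrite /= rnext_prev | right].
- move=> v /vertex_cases [i ->]; rewrite /ed unlift_rim inE.
  by case ci: (c (prev i)); rewrite ?ci.
- move=> [] i; rewrite inE => ci.
    exists (rim i); rewrite ?rim_neq //;
    by rewrite /ed unlift_rim; move: ci; case: (c (prev i)).
  exists (rim (rnext i)); rewrite ?rim_neq //;
  by rewrite /ed unlift_rim prev_rnext ci.
- move=> v w /vertex_cases [i ->] /vertex_cases [j ->].
  rewrite /ed !unlift_rim.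
  case: (c (prev i)); case: (c (prev j)) => // E.
    have E' : prev i = prev j
      by have := congr1 (fun e : wedge k => if e is inr x then x else i) E.
    by rewrite -(rnext_prev i) E' rnext_prev.
  have E' : i = j
    by have := congr1 (fun e : wedge k => if e is inl x then x else i) E.
  by rewrite E'.
Qed.

Lemma chord_path (S : {set wedge k}) u m :
  (forall j, j < m -> inr (ix (u + j)) \in S) ->
  connect (adj S) (rim (ix u)) (rim (ix (u + m))).
Proof.
elim: m => [|m IH] H; first by rewrite addn0 connect0.
apply: connect_trans (IH (fun j jm => H j (ltnW jm))) _.
apply: connect1; have := adj_edge (H m (ltnSn m)).
by rewrite /= rnext_ix addnS.
Qed.

Lemma L2 (S : {set wedge k}) u m : 0 < m < k ->
  (forall j, j < m -> inr (ix (u + j)) \in S) ->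
  inl (ix u) \in S -> inl (ix (u + m)) \in S -> ~~ acyclic S.
Proof.
move=> mr hc hu hm; rewrite /acyclic negb_forall; apply/existsP.
exists (inl (ix u)); rewrite negb_imply hu negbK /=.
apply: connect_trans (_ : connect _ _ (rim (ix (u + m)))) _.
  apply: connect1; have := @adj_edge (S :\ inl (ix u)) (inl (ix (u + m))).
  by rewrite !inE hm andbT (ix_neq _ mr); apply.
rewrite (sym_connect_sym (adj_sym _)); apply: chord_path => j jm.
by rewrite !inE hc.
Qed.

Lemma L4 (S : {set wedge k}) : (forall i, inr i \in S) -> ~~ acyclic S.
Proof.
move=> hS; rewrite /acyclic negb_forall; apply/existsP.
exists (inr (ix 0)); rewrite negb_imply hS negbK /= rnext_ix.
rewrite (sym_connect_sym (adj_sym _)).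
have := @chord_path (S :\ inr (ix 0)) 1 k.-1.
have ixk : ix k = ix 0 by apply: val_inj; rewrite /= modnn mod0n.
rewrite add1n prednK // ixk; apply => j jk.
rewrite !inE hS andbT; apply/negP => /eqP E.
have : ix (0 + j.+1) != ix 0 by apply: ix_neq; lia.
have E' : ix (1 + j) = ix 0
  by have := congr1 (fun e : wedge k => if e is inr x then x else ix 0) E.
by rewrite add0n -add1n E' eqxx.
Qed.

Lemma bool_neq (x b : bool) : x != b -> x = ~~ b. Proof. by case: x; case: b. Qed.

Section Necessity.
Variable T : {set wedge k}.
Hypothesis aT : acyclic T.
Hypothesis aC : acyclic (~: T).
Let r i := inl i \in T.
Let c i := inr i \in T.

Lemma L2' b u m : 0 < m < k -> (forall j, j < m -> c (ix (u + j)) = b) ->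
  r (ix u) = b -> r (ix (u + m)) = b -> False.
Proof.
move=> mr hc hu hm.
suff : ~~ acyclic (if b then T else ~: T) by case: (b) => /=; rewrite ?aT ?aC.
case: b hc hu hm => hc hu hm; apply: (@L2 _ u m mr).
- by move=> j /hc.
- by [].
- by [].
- by move=> j /hc; rewrite inE /c => ->.
- by rewrite inE -/(r _) hu.
- by rewrite inE -/(r _) hm.
Qed.

Lemma nonconst b s : ~ (forall j, j < k -> c (ix (s + j)) = b).
Proof.
move=> H.
have all i : c i = b by case: (ix_surj s i) => j jk <-; exact: H.
case: b H all => _ all.
  by move: aT; have := @L4 T; rewrite /c in all; move=> /(_ all) /negP.
have := @L4 (~: T) => /(_ _) /negP; apply; last exact: aC.
by move=> i; rewrite inE -/(c i) all.
Qed.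

Definition Jinv u0 n := exists b s m,
  [/\ s + m = u0 + n, 0 < m < k, (forall j, j < m -> c (ix (s + j)) = b),
      r (ix s) = b & r (ix (s + m)) = ~~ b].

Lemma J1 (u0 : 'I_k) : r u0 = c u0 -> Jinv u0 1.
Proof.
move=> ru; exists (c u0), u0, 1; split => //.
- by apply/andP; split; lia.
- by move=> j; rewrite ltnS leqn0 => /eqP ->; rewrite addn0 ix_ord.
- by rewrite ix_ord.
apply: bool_neq; apply/negP => /eqP E.
apply: (@L2' (c u0) u0 1) => //; first by apply/andP; split; lia.
  by move=> j; rewrite ltnS leqn0 => /eqP ->; rewrite addn0 ix_ord.
by rewrite ix_ord.
Qed.

Lemma Jstep u0 n : Jinv u0 n -> Jinv u0 n.+1.
Proof.
move=> [b [s [m [E mr cs rs rm]]]].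
case: (boolP (c (ix (u0 + n)) == b)) => [/eqP cb|cb].
  have cs' j : j < m.+1 -> c (ix (s + j)) = b.
    rewrite ltnS leq_eqVlt => /orP[/eqP ->|]; last exact: cs.
    by rewrite E.
  have mk : m.+1 < k.
    rewrite ltn_neqAle (_ : m < k) ?andbT; last by case/andP: mr.
    apply/negP => /eqP mk; apply: (nonconst (b := b) (s := s)) => j; rewrite -mk; exact: cs'.
  have mr' : 0 < m.+1 < k by rewrite mk.
  exists b, s, m.+1; split => //; first by rewrite addnS E addnS.
  apply: bool_neq; apply/negP => /eqP h.
  exact: (@L2' b s m.+1).
have cb' := bool_neq cb.
have rr : r (ix (u0 + n)) = ~~ b by rewrite -E.
have c1 j : j < 1 -> c (ix ((u0 + n) + j)) = ~~ b.
  by rewrite ltnS leqn0 => /eqP ->; rewrite addn0.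
have m1 : 0 < 1 < k by apply/andP; split; lia.
exists (~~ b), (u0 + n), 1; split => //; first by rewrite addn1 addnS.
apply: bool_neq; apply/negP => /eqP h.
exact: (@L2' (~~ b) (u0 + n) 1).
Qed.

Lemma Jall (u0 : 'I_k) : r u0 = c u0 -> forall n, Jinv u0 n.+1.
Proof. by move=> h; elim=> [|n IH]; [exact: J1 | exact: Jstep]. Qed.

Lemma famB (u0 : 'I_k) : r u0 = c u0 -> forall i, r (rnext i) = ~~ c i.
Proof.
move=> h i; case: (ix_surj u0 (rnext i)) => j jk E.
have [b [s [m [E' mr cs rs rm]]]] := Jall h (j + k.-1).
have hm : s + m = (u0 + j) + k by rewrite E' -addnS prednK // addnA.
have e1 : ix (s + m) = rnext i by rewrite hm ix_addk.
have m0 : 0 < m by case/andP: mr.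
have e2 : ix (s + m.-1) = i.
  apply: rnext_inj; rewrite rnext_ix -e1 -addnS prednK //.
rewrite -e1 rm -e2 cs //; by rewrite prednK.
Qed.

End Necessity.

Definition NC := [set c : {ffun 'I_k -> bool} | [exists i, c i] && [exists i, ~~ c i]].

Lemma fA_compl (c : 'I_k -> bool) : ~: fA c = fA (fun i => ~~ c i).
Proof. by apply/setP => -[] i; rewrite !inE. Qed.
Lemma fB_compl (c : 'I_k -> bool) : ~: fB c = fB (fun i => ~~ c i).
Proof. by apply/setP => -[] i; rewrite !inE. Qed.

Lemma fA_coupled (c : {ffun 'I_k -> bool}) : c \in NC -> coupled_tree (fA c).
Proof.
rewrite inE => /andP[/existsP[i1 h1] /existsP[i0 h0]].
rewrite /coupled_tree fA_compl; apply/andP; split; apply: fA_tree.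
  by exists i0.
by exists i1; rewrite negbK.
Qed.
Lemma fB_coupled (c : {ffun 'I_k -> bool}) : c \in NC -> coupled_tree (fB c).
Proof.
rewrite inE => /andP[/existsP[i1 h1] /existsP[i0 h0]].
rewrite /coupled_tree fB_compl; apply/andP; split; apply: fB_tree.
  by exists i0.
by exists i1; rewrite negbK.
Qed.

Lemma coupled_fam T : coupled_tree T ->
  let c := [ffun i => inr i \in T] in
  c \in NC /\ (T = fA c \/ T = fB c).
Proof.
case/andP=> /andP[_ aT] /andP[_ aC] c; split.
  rewrite inE; apply/andP; split.
    case: (boolP [exists i, c i]) => // /existsPn H.
    have := @L4 (~: T); rewrite aC; apply => i; rewrite inE.
    by have := H i; rewrite ffunE.
  case: (boolP [exists i, ~~ c i]) => // /existsPn H.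
  have := @L4 T; rewrite aT; apply => i.
  by have := H i; rewrite ffunE negbK.
case: (boolP [forall i, (inl i \in T) == ~~ (inr i \in T)]) => [/forallP H|].
  by left; apply/setP => -[] i; rewrite !inE ffunE // (eqP (H i)).
case/forallPn => u0 hu0.
have ru : inl u0 \in T = (inr u0 \in T) by move: hu0; case: (inl u0 \in T); case: (inr u0 \in T).
have B := famB aT aC ru.
right; apply/setP => -[] i; rewrite !inE ffunE //.
by rewrite -(B (prev i)) rnext_prev.
Qed.

Lemma fA_inj : {in NC &, injective (fun c : {ffun 'I_k -> bool} => fA c)}.
Proof.
move=> c c' _ _ E; apply/ffunP => i.
by have := congr1 (fun S : {set wedge k} => inr i \in S) E; rewrite /= !inE.
Qed.
Lemma fB_inj : {in NC &, injective (fun c : {ffun 'I_k -> bool} => fB c)}.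
Proof.
move=> c c' _ _ E; apply/ffunP => i.
by have := congr1 (fun S : {set wedge k} => inr i \in S) E; rewrite /= !inE.
Qed.

Lemma const_of_step (c : 'I_k -> bool) : (forall i, c (rnext i) = c i) -> forall i, c i = c (ix 0).
Proof.
move=> H i; rewrite -(ix_ord i); elim: (val i) => // n IH.
by rewrite -rnext_ix H.
Qed.

Lemma fAB_disj (c c' : 'I_k -> bool) : [exists i, c' i] -> [exists i, ~~ c' i] -> fA c != fB c'.
Proof.
move=> /existsP[i1 h1] /existsP[i0 h0]; apply/eqP => E.
have hc i : c i = c' i by have := congr1 (fun S : {set wedge k} => inr i \in S) E; rewrite /= !inE.
have hr i : c i = c' (prev i).
  by have := congr1 (fun S : {set wedge k} => inl i \in S) E; rewrite /= !inE => /negb_inj.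
have st i : c' (rnext i) = c' i by rewrite -hc hr prev_rnext.
move: h0; rewrite (const_of_step st i0) -(const_of_step st i1) h1.
by [].
Qed.

Lemma valenceE T i : valence T (rim i) =
  (inl i \in T) + (inr i \in T) + (inr (prev i) \in T).
Proof.
pose s := [:: inl i; inr i; inr (prev i)].
have inc e : incident e (rim i) = (e \in s).
  case: e => j; rewrite /incident /= !in_cons in_nil orbF.
    by rewrite (inj_eq rim_inj) (inj_eq (@inl_inj _ _)) orbF.
  rewrite !(inj_eq rim_inj) !(inj_eq (@inr_inj _ _)) -[j == prev i](inj_eq rnext_inj) rnext_prev.
  by [].
have us : uniq [seq e <- s | e \in T].
  apply: filter_uniq; rewrite /s /= !in_cons in_nil /= andbT.
  by rewrite orbF (inj_eq (@inr_inj _ _)) eq_sym prev_neq.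
rewrite /valence (eq_card (B := mem [seq e <- s | e \in T])); last first.
  by move=> e; rewrite inE mem_filter inc.
rewrite (card_uniqP us) size_filter /= addn0 !addnA.
by [].
Qed.

End Wheel.

Lemma nonconst_of (k : nat) (f : 'I_k -> bool) (i j : 'I_k) : f i != f j ->
  [exists x, f x] && [exists x, ~~ f x].
Proof.
case fi: (f i); case fj: (f j) => // _; apply/andP; split; apply/existsP;
  by [exists i; rewrite fi | exists j; rewrite fj | exists j; rewrite fj | exists i; rewrite fi].
Qed.

Theorem proposition3p3 (k : nat) (hk : 3 <= k) (d : 'I_k -> nat)
    (hd : forall i, (d i == 1) || (d i == 2))
    (hnc : exists i j, d i != d j) :
  #|[set T : {set wedge k} | coupled_tree T &&
       [forall i : 'I_k, valence T (rim i) == d i]]| = 2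
  /\ #|[set T : {set wedge k} | coupled_tree T]| = 2 ^ k.+1 - 4.
Proof.
have hd2 x y : d x != d y -> (d x == 2) != (d y == 2).
  by move: (hd x) (hd y) => /orP[]/eqP-> /orP[]/eqP->.
have dval x (b : bool) : (1 + b == d x) = (b == (d x == 2)).
  by move: (hd x) => /orP[]/eqP->; case: b.
split.
  pose cA := [ffun i => d (rnext i) == 2].
  pose cB := [ffun i => d i == 2].
  case: hnc => i [j dij].
  have cAN : cA \in NC k.
    rewrite inE; apply: (@nonconst_of _ cA (prev hk i) (prev hk j)).
    by rewrite !ffunE !rnext_prev; apply: hd2.
  have cBN : cB \in NC k.
    by rewrite inE; apply: (@nonconst_of _ cB i j); rewrite !ffunE; apply: hd2.
  have -> : [set T : {set wedge k} | coupled_tree T &&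
       [forall i : 'I_k, valence T (rim i) == d i]] = [set fA cA; fB hk cB].
    apply/setP => T; rewrite !inE; apply/idP/idP.
      case/andP => cT /forallP V.
      move: (coupled_fam hk cT) => /= [_]; move: [ffun i => inr i \in T] => c.
      case=> E; subst T; apply/orP; [left|right];
        [suff -> : c = cA by [] | suff -> : c = cB by []]; apply/ffunP => x.
        have := V (rnext x); rewrite valenceE !inE prev_rnext ffunE.
        rewrite (_ : ~~ c (rnext x) + c (rnext x) + c x = 1 + c x);
          last by case: (c (rnext x)).
        by rewrite dval => /eqP.
      have := V x; rewrite valenceE !inE ffunE.
      rewrite (_ : ~~ c (prev hk x) + c x + c (prev hk x) = 1 + c x);
        last by case: (c x); case: (c (prev hk x)).
      by rewrite dval => /eqP.
    case/orP => /eqP ->; apply/andP; split.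
    - exact: fA_coupled.
    - apply/forallP => x; rewrite valenceE !inE !ffunE rnext_prev.
      rewrite (_ : (d (rnext x) != 2) + (d (rnext x) == 2) = 1); last by case: (_ == _).
      by rewrite dval.
    - exact: fB_coupled.
    - apply/forallP => x; rewrite valenceE !inE !ffunE.
      rewrite (_ : (d (prev hk x) != 2) + (d x == 2) + (d (prev hk x) == 2) = 1 + (d x == 2));
        last by case: (d x == 2); case: (d (prev hk x) == 2).
      by rewrite dval.
  rewrite cards2; move: cBN; rewrite inE => /andP[h1 h2].
  by rewrite (fAB_disj hk cA h1 h2).
have cardNC : #|NC k| = 2 ^ k - 2.
  have C : ~: NC k = [set [ffun=> true]; [ffun=> false]].
    apply/setP => c; rewrite !inE negb_and !negb_exists.
    apply/idP/idP.
      case/orP => /forallP H; apply/orP; [right|left]; apply/eqP/ffunP => x;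
        rewrite ffunE; [exact: (negbTE (H x)) | exact: (negbNE (H x))].
    by case/orP => /eqP ->; apply/orP; [right|left]; apply/forallP => x; rewrite ffunE.
  have ne : [ffun=> true] != [ffun=> false] :> {ffun 'I_k -> bool}.
    by apply/eqP => /ffunP /(_ (ix hk 0)); rewrite !ffunE.
  have := cardsC (NC k); rewrite C cards2 ne card_ffun card_bool card_ord.
  lia.
have -> : [set T : {set wedge k} | coupled_tree T] =
    (fun c : {ffun 'I_k -> bool} => fA c) @: NC k :|:
    (fun c : {ffun 'I_k -> bool} => fB hk c) @: NC k.
  apply/setP => T; rewrite !inE; apply/idP/idP.
    move=> cT; move: (coupled_fam hk cT) => /= [].
    move: [ffun i => inr i \in T] => c cN [E|E]; apply/orP; [left|right];
      by apply/imsetP; exists c.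
  by case/orP => /imsetP [c cN ->]; [exact: fA_coupled | exact: fB_coupled].
rewrite cardsU !card_in_imset; try exact: fA_inj; try exact: fB_inj.
have -> : (fun c : {ffun 'I_k -> bool} => fA c) @: NC k :&:
    (fun c : {ffun 'I_k -> bool} => fB hk c) @: NC k = set0.
  apply/setP => T; rewrite !inE; apply/negP => /andP[/imsetP[c _ ->] /imsetP[c' c'N E]].
  move: c'N; rewrite inE => /andP[h1 h2].
  by move: (fAB_disj hk c h1 h2); rewrite E eqxx.
rewrite cards0 cardNC expnS; lia.
Qed.
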